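(* Let $\lambda_0\in\mathfrak h^*_{\mathbb R}$ lie on exactly one $A_2$ vanishing line $P(n_0,\alpha_0)$. Then, with $f$ defined on all of $\mathfrak h^*_{\mathbb R}$ by the formula below, the coefficientwise limits exist and $$\lim_{\epsilon\to0^+}f(\lambda_0+\epsilon\alpha_0)-\lim_{\epsilon\to0^-}f(\lambda_0+\epsilon\alpha_0)=2\,e(\lambda_0)\,x^{n_0\alpha_0}f(\lambda_0-n_0\alpha_0),$$ where $e(\lambda_0)=+1$ if $\alpha_0\in\{\alpha_1,\alpha_2\}$, $e(\lambda_0)=+1$ if $\alpha_0=\alpha_3$ and $\lambda_0+\rho\notin C$, and $e(\lambda_0)=-1$ if $\alpha_0=\alpha_3$ and $\lambda_0+\rho\in C$.
   Context: $\mathfrak g=A_2$ ($\mathfrak{sl}_3$) with simple roots $\alpha_1,\alpha_2$, $(\alpha_1,\alpha_1)=(\alpha_2,\alpha_2)=2$, $(\alpha_1,\alpha_2)=-1$, $\alpha_3=\alpha_1+\alpha_2$, $\Delta_+=\{\alpha_1,\alpha_2,\alpha_3\}$, $\rho=\alpha_3$. $\mathfrak h^*_{\mathbb R}$ is the real span of $\alpha_1,\alpha_2$. The vanishing lines are $P(n,\alpha)=\{\lambda:(\alpha,\lambda+\rho)=n\}$, $n\in\mathbb Z_{\ge1}$, $\alpha\in\Delta_+$. $C=\{\lambda\in\mathfrak h^*_{\mathbb R}:(\alpha_1,\lambda)\ge0,(\alpha_2,\lambda)\ge0\}$. Monomials: $x^{\alpha_1}=x_1$, $x^{\alpha_2}=x_2$,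 $x^{\alpha_3}=x_1x_2$, $x^{n\alpha}=(x^\alpha)^n$. For $\lambda\in\mathfrak h^*_{\mathbb R}$ put $a_i=a_i(\lambda)=\max(0,\lfloor(\alpha_i,\lambda+\rho)\rfloor)$, $i=1,2,3$, and define $f(\lambda)=\tilde f(a_1,a_2,a_3)/D$ where $D=(1-x_1^2)(1-x_2^2)(1-x_1^2x_2^2)$ and $\tilde f(a_1,a_2,a_3)=(1+x_1)(1+x_2)(1+x_1x_2)-2x_1^{a_1+1}(1+x_2)(1+x_1x_2)-2x_2^{a_2+1}(1+x_1)(1+x_1x_2)-2(x_1x_2)^{a_3+1}(1+x_1)(1+x_2)+4x_1^{a_1+1}(x_1x_2)^{\min(a_2,a_3)+1}(1+x_2)+4x_2^{a_2+1}(x_1x_2)^{\min(a_1,a_3)+1}(1+x_1)+4x_1^{\max(a_1,a_3)+1}x_2^{\max(a_2,a_3)+1}(1+x_1x_2)-8x_1^{\min(a_2,a_3)+a_1+2}x_2^{\min(a_1,a_3)+a_2+2}$. *)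

(* Defs.v *)
From Stdlib Require Import Reals ZArith.
From Coquelicot Require Import Coquelicot.
Open Scope R_scope.

(* h*_R : an element (c1,c2) stands for c1*alpha1 + c2*alpha2. *)
Definition wt := (R * R)%type.
Definition wadd (u v : wt) : wt := (fst u + fst v, snd u + snd v).
Definition wscal (c : R) (u : wt) : wt := (c * fst u, c * snd u).
(* (alpha1,alpha1)=(alpha2,alpha2)=2, (alpha1,alpha2)=-1 *)
Definition ip (u v : wt) : R :=
  2 * fst u * fst v - fst u * snd v - snd u * fst v + 2 * snd u * snd v.

Inductive proot := A1 | A2 | A3.
Definition rvec (a : proot) : wt :=
  match a with A1 => (1, 0) | A2 => (0, 1) | A3 => (1, 1) end.
Definition alpha1 : wt := rvec A1.
Definition alpha2 : wt := rvec A2.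
Definition alpha3 : wt := rvec A3.
Definition rho : wt := alpha3.

(* lambda lies on the vanishing line P(n, alpha): (alpha, lambda + rho) = n *)
Definition on_line (n : nat) (a : proot) (l : wt) : Prop :=
  ip (rvec a) (wadd l rho) = INR n.

Definition inC (l : wt) : Prop := 0 <= ip alpha1 l /\ 0 <= ip alpha2 l.

(* a_i(lambda) = max(0, floor((alpha_i, lambda+rho)));  Int_part = floor,
   Z.to_nat truncates negatives to 0. *)
Definition aa (a : proot) (l : wt) : nat :=
  Z.to_nat (Int_part (ip (rvec a) (wadd l rho))).

(* Formal power series in x1, x2 with real coefficients:
   s p q = coefficient of x1^p x2^q. *)
Definition series := nat -> nat -> R.
Definition sadd (s t : series) : series := fun p q => s p q + t p q.
Definition sscal (c : R) (s : series) : series := fun p q => c * s p q.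
Definition smul (s t : series) : series := fun p q =>
  sum_f_R0 (fun i => sum_f_R0 (fun j => s i j * t (p - i)%nat (q - j)%nat) q) p.
Definition mono (m k : nat) : series := fun p q =>
  if (Nat.eqb p m && Nat.eqb q k)%bool then 1 else 0.
Definition one : series := mono 0 0.
Definition x1 : series := mono 1 0.
Definition x2 : series := mono 0 1.
Definition xpow (n : nat) (a : proot) : series :=
  match a with A1 => mono n 0 | A2 => mono 0 n | A3 => mono n n end.

(* 1/(1 - x1^2), 1/(1 - x2^2), 1/(1 - x1^2 x2^2) as geometric series *)
Definition geo1 : series := fun p q => if (Nat.even p && Nat.eqb q 0)%bool then 1 else 0.
Definition geo2 : series := fun p q => if (Nat.eqb p 0 && Nat.even q)%bool then 1 else 0.
Definition geo3 : series := fun p q => if (Nat.even p && Nat.eqb p q)%bool then 1 else 0.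
Definition invD : series := smul geo1 (smul geo2 geo3).

Definition ftilde (a1 a2 a3 : nat) : series :=
  let X1 := sadd one x1 in
  let X2 := sadd one x2 in
  let X3 := sadd one (mono 1 1) in
  sadd (smul X1 (smul X2 X3))
  (sadd (sscal (-2) (smul (mono (a1+1) 0) (smul X2 X3)))
  (sadd (sscal (-2) (smul (mono 0 (a2+1)) (smul X1 X3)))
  (sadd (sscal (-2) (smul (mono (a3+1) (a3+1)) (smul X1 X2)))
  (sadd (sscal 4 (smul (mono (a1+1) 0)
                   (smul (mono (Nat.min a2 a3 + 1) (Nat.min a2 a3 + 1)) X2)))
  (sadd (sscal 4 (smul (mono 0 (a2+1))
                   (smul (mono (Nat.min a1 a3 + 1) (Nat.min a1 a3 + 1)) X1)))
  (sadd (sscal 4 (smul (mono (Nat.max a1 a3 + 1) (Nat.max a2 a3 + 1)) X3))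
        (sscal (-8) (mono (Nat.min a2 a3 + a1 + 2) (Nat.min a1 a3 + a2 + 2))))))))).

Definition fA2 (l : wt) : series :=
  smul (ftilde (aa A1 l) (aa A2 l) (aa A3 l)) invD.

Definition esign (a0 : proot) (l0 : wt) : R :=
  match a0 with
  | A3 => (* -1 iff lambda0 + rho in C, i.e. both pairings >= 0 *)
      let m := wadd l0 rho in
      match Rle_dec 0 (ip alpha1 m), Rle_dec 0 (ip alpha2 m) with
      | left _, left _ => -1
      | _, _ => 1
      end
  | _ => 1
  end.

(* Main.v *)
Require Import Defs.
From Stdlib Require Import Reals ZArith.
From Coquelicot Require Import Coquelicot.
Open Scope R_scope.
From Stdlib Require Import Lia Lra FunctionalExtensionality.
Require Import Defs.

Lemma sum_delta (g : nat -> R) (a p : nat) :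
  sum_f_R0 (fun i => if Nat.eqb i a then g i else 0) p = if Nat.leb a p then g a else 0.
Proof.
  induction p as [|p IH]; cbn [sum_f_R0].
  - destruct a; reflexivity.
  - rewrite IH. destruct (Nat.eqb_spec (S p) a); destruct (Nat.leb_spec a p);
    destruct (Nat.leb_spec a (S p)); subst; try lia; ring.
Qed.

Lemma smul_mono_l a b s p q :
  smul (mono a b) s p q = if (Nat.leb a p && Nat.leb b q)%bool then s (p - a)%nat (q - b)%nat else 0.
Proof.
  unfold smul, mono.
  rewrite (sum_eq _ (fun i => if Nat.eqb i a then
       sum_f_R0 (fun j => if Nat.eqb j b then s (p - i)%nat (q - j)%nat else 0) q else 0)).
  - rewrite sum_delta. destruct (Nat.leb a p); simpl.
    + rewrite sum_delta. destruct (Nat.leb b q); reflexivity.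
    + reflexivity.
  - intros i _. destruct (Nat.eqb i a); simpl.
    + apply sum_eq. intros j _. destruct (Nat.eqb j b); ring.
    + rewrite (sum_eq _ (fun _ => 0)). 2: intros; ring.
      clear. induction q; simpl; [reflexivity| rewrite IHq; ring].
Qed.

Lemma smul_mono_mono a b c d : smul (mono a b) (mono c d) = mono (a + c) (b + d).
Proof.
  extensionality p; extensionality q. rewrite smul_mono_l. unfold mono.
  destruct (Nat.leb_spec a p); destruct (Nat.leb_spec b q); simpl;
  destruct (Nat.eqb_spec (p - a) c); destruct (Nat.eqb_spec (q - b) d);
  destruct (Nat.eqb_spec p (a + c)); destruct (Nat.eqb_spec q (b + d)); simpl;
  try reflexivity; lia.
Qed.

Lemma sum_lin (f g : nat -> R) c1 c2 n :
  sum_f_R0 (fun i => c1 * f i + c2 * g i) n = c1 * sum_f_R0 f n + c2 * sum_f_R0 g n.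
Proof. induction n; simpl; [ring| rewrite IHn; ring]. Qed.

Lemma smul_lin_l c1 c2 s t u :
  smul (sadd (sscal c1 s) (sscal c2 t)) u = sadd (sscal c1 (smul s u)) (sscal c2 (smul t u)).
Proof.
  extensionality p; extensionality q. unfold smul, sadd, sscal.
  rewrite <- sum_lin. apply sum_eq; intros i _. rewrite <- sum_lin. apply sum_eq; intros j _. ring.
Qed.
Lemma smul_lin_r c1 c2 s t u :
  smul u (sadd (sscal c1 s) (sscal c2 t)) = sadd (sscal c1 (smul u s)) (sscal c2 (smul u t)).
Proof.
  extensionality p; extensionality q. unfold smul, sadd, sscal.
  rewrite <- sum_lin. apply sum_eq; intros i _. rewrite <- sum_lin. apply sum_eq; intros j _. ring.
Qed.
Lemma sscal1 s : sscal 1 s = s.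
Proof. extensionality p; extensionality q. unfold sscal; ring. Qed.
Lemma smul_sadd_l s t u : smul (sadd s t) u = sadd (smul s u) (smul t u).
Proof. rewrite <- (sscal1 s), <- (sscal1 t), smul_lin_l, !sscal1. reflexivity. Qed.
Lemma smul_sadd_r s t u : smul u (sadd s t) = sadd (smul u s) (smul u t).
Proof. rewrite <- (sscal1 s), <- (sscal1 t), smul_lin_r, !sscal1. reflexivity. Qed.
Lemma sscal0 s : sscal 0 s = fun _ _ => 0.
Proof. extensionality p; extensionality q. unfold sscal; ring. Qed.
Lemma sadd0 s : sadd s (fun _ _ => 0) = s.
Proof. extensionality p; extensionality q. unfold sadd; ring. Qed.
Lemma smul_sscal_l c s u : smul (sscal c s) u = sscal c (smul s u).
Proof.
  pose proof (smul_lin_l c 0 s s u) as H. rewrite !sscal0, !sadd0 in H. exact H.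
Qed.
Lemma smul_sscal_r c s u : smul u (sscal c s) = sscal c (smul u s).
Proof.
  pose proof (smul_lin_r c 0 s s u) as H. rewrite !sscal0, !sadd0 in H. exact H.
Qed.

Definition monoN := mono.
Lemma mono_canon e f e' f' : e = e' -> f = f' -> mono e f = monoN e' f'.
Proof. intros -> ->; reflexivity. Qed.

Ltac coeffs A k e :=
  let g := eval pattern A, k in e in
  match g with ?h _ _ =>
    let c := eval vm_compute in (h 0 0)%nat in
    let a := eval vm_compute in (h 1 0 - h 0 0)%nat in
    let b := eval vm_compute in (h 0 1 - h 0 0)%nat in
    constr:((c + a * A + b * k)%nat) end.

Ltac canon A k :=
  repeat match goal with |- context [mono ?e ?f] =>
    let ce := coeffs A k e in let cf := coeffs A k f in
    rewrite (mono_canon e f ce cf) by lia end.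

Ltac minmax :=
  repeat match goal with
  | |- context [Nat.min ?x ?y] => (rewrite (Nat.min_l x y) by lia) || (rewrite (Nat.min_r x y) by lia)
  | |- context [Nat.max ?x ?y] => (rewrite (Nat.max_l x y) by lia) || (rewrite (Nat.max_r x y) by lia)
  end.

Ltac expand := unfold ftilde, Defs.one, x1, x2; cbv zeta;
  repeat (rewrite ?smul_sadd_l, ?smul_sadd_r, ?smul_sscal_l, ?smul_sscal_r, ?smul_mono_mono).

Ltac polyid A k := expand; minmax; extensionality p; extensionality q;
  unfold sadd, sscal; canon A k; ring.

Lemma alg1a k A : sadd (ftilde (S k) A (A + S k)) (sscal (-1) (ftilde k A (A + S k)))
  = sscal 2 (smul (mono (S k) 0) (ftilde 0 (A + S k) A)).
Proof. polyid A k. Qed.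
Lemma alg1b k B : (B <= k)%nat -> sadd (ftilde (S k) 0 B) (sscal (-1) (ftilde k 0 B))
  = sscal 2 (smul (mono (S k) 0) (ftilde 0 B 0)).
Proof. intro. polyid B k. Qed.
Lemma alg2a k A : sadd (ftilde A (S k) (A + S k)) (sscal (-1) (ftilde A k (A + S k)))
  = sscal 2 (smul (mono 0 (S k)) (ftilde (A + S k) 0 A)).
Proof. polyid A k. Qed.
Lemma alg2b k B : (B <= k)%nat -> sadd (ftilde 0 (S k) B) (sscal (-1) (ftilde 0 k B))
  = sscal 2 (smul (mono 0 (S k)) (ftilde B 0 0)).
Proof. intro. polyid B k. Qed.
Lemma alg3a k G : sadd (ftilde 0 (S k + G) (S k)) (sscal (-1) (ftilde 0 (S k + G) k))
  = sscal 2 (smul (mono (S k) (S k)) (ftilde 0 G 0)).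
Proof. polyid G k. Qed.
Lemma alg3b F J : sadd (ftilde F J (S (F + J))) (sscal (-1) (ftilde F J (F + J)))
  = sscal (-2) (smul (mono (S (F + J)) (S (F + J))) (ftilde 0 0 0)).
Proof. polyid F J. Qed.
Lemma alg3c k H : sadd (ftilde (S k + H) 0 (S k)) (sscal (-1) (ftilde (S k + H) 0 k))
  = sscal 2 (smul (mono (S k) (S k)) (ftilde H 0 0)).
Proof. polyid H k. Qed.

Lemma sum_zero n : sum_f_R0 (fun _ => 0) n = 0.
Proof. induction n; cbn [sum_f_R0]; [reflexivity| rewrite IHn; ring]. Qed.

Lemma sum_shift (h : nat -> R) a p :
  sum_f_R0 (fun i => if Nat.leb a i then h i else 0) p =
  if Nat.leb a p then sum_f_R0 (fun i => h (a + i)%nat) (p - a) else 0.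
Proof.
  induction p as [|p IH]; cbn [sum_f_R0].
  - destruct a; cbn [Nat.leb]; simpl; reflexivity.
  - rewrite IH. destruct (Nat.leb_spec a p); destruct (Nat.leb_spec a (S p)); try lia.
    + replace (S p - a)%nat with (S (p - a)) by lia. cbn [sum_f_R0].
      replace (a + S (p - a))%nat with (S p) by lia. reflexivity.
    + replace a with (S p) by lia. rewrite Nat.sub_diag. cbn [sum_f_R0].
      rewrite Nat.add_0_r. ring.
    + ring.
Qed.

Lemma smul_assoc_mono a b s t :
  smul (mono a b) (smul s t) = smul (smul (mono a b) s) t.
Proof.
  extensionality p; extensionality q. rewrite smul_mono_l. symmetry.
  unfold smul at 1. 
  rewrite (sum_eq _ (fun i => if Nat.leb a i then
     (if Nat.leb b q then sum_f_R0 (fun j => s (i - a)%nat j * t (p - i)%nat (q - b - j)%nat) (q - b) else 0)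
     else 0)).
  - rewrite sum_shift. destruct (Nat.leb_spec a p); destruct (Nat.leb_spec b q); simpl.
    + unfold smul. apply sum_eq; intros i Hi. apply sum_eq; intros j Hj.
      f_equal; f_equal; lia.
    + apply sum_zero.
    + reflexivity.
    + reflexivity.
  - intros i Hi. destruct (Nat.leb_spec a i).
    + rewrite (sum_eq _ (fun j => if Nat.leb b j then s (i - a)%nat (j - b)%nat * t (p - i)%nat (q - j)%nat else 0)).
      * rewrite sum_shift. destruct (Nat.leb b q); [|reflexivity].
        apply sum_eq; intros j Hj. f_equal; f_equal; lia.
      * intros j Hj. rewrite smul_mono_l. destruct (Nat.leb_spec a i); try lia.
        destruct (Nat.leb b j); simpl; ring.
    + rewrite (sum_eq _ (fun _ => 0)). apply sum_zero.
      intros j Hj. rewrite smul_mono_l. destruct (Nat.leb_spec a i); try lia. simpl; ring.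
Qed.

Definition gg (c : R) : nat := Z.to_nat (Int_part c).

Lemma aa_gg a l : aa a l = gg (ip (rvec a) (wadd l rho)).
Proof. reflexivity. Qed.

Lemma ip_shift a l e v :
  ip (rvec a) (wadd (wadd l (wscal e v)) rho) = ip (rvec a) (wadd l rho) + e * ip (rvec a) v.
Proof. unfold ip, wadd, wscal; destruct a; simpl; ring. Qed.

Lemma ip3 x : ip (rvec A3) x = ip (rvec A1) x + ip (rvec A2) x.
Proof. unfold ip; simpl; ring. Qed.

Lemma ip_vals i a : ip (rvec i) (rvec a) = 2 \/ ip (rvec i) (rvec a) = 1 \/ ip (rvec i) (rvec a) = -1.
Proof. destruct i, a; unfold ip; simpl; first [left; ring | right; left; ring | right; right; ring]. Qed.

Lemma IP_shift w z : Int_part (w + IZR z) = (Int_part w + z)%Z.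
Proof.
  symmetry; apply Int_part_spec. destruct (base_Int_part w). rewrite plus_IZR. lra.
Qed.

Lemma IP_neg w : IZR (Int_part w) <> w -> Int_part (- w) = (- Int_part w - 1)%Z.
Proof.
  intro H. symmetry; apply Int_part_spec. destruct (base_Int_part w).
  rewrite minus_IZR, opp_IZR. lra.
Qed.

Lemma stable c : (forall n : nat, (1 <= n)%nat -> c <> INR n) ->
  exists d : posreal, forall x, Rabs x < d -> gg (c + x) = gg c.
Proof.
  intro Hc. unfold gg. destruct (base_Int_part c) as [H1 H2].
  set (z := Int_part c) in *.
  destruct (Req_dec (IZR z) c) as [Heq|Hne].
  - assert (Hz : (z <= 0)%Z).
    { destruct (Z_le_gt_dec z 0) as [|Hg]; [assumption|].
      exfalso. apply (Hc (Z.to_nat z)). lia.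
      rewrite INR_IZR_INZ, Z2Nat.id by lia. auto. }
    assert (Hd : 0 < 1/2) by lra.
    exists (mkposreal _ Hd). simpl. intros x Hx.
    destruct (base_Int_part (c + x)) as [H3 H4].
    assert (Int_part (c + x) <= 0)%Z.
    { apply Zlt_succ_le. apply lt_IZR. apply Rabs_def2 in Hx.
      apply IZR_le in Hz. unfold Z.succ. rewrite plus_IZR. simpl. lra. }
    unfold z; lia.
  - assert (Hd : 0 < Rmin (c - IZR z) (IZR z + 1 - c)) by (apply Rmin_glb_lt; lra).
    exists (mkposreal _ Hd). simpl. intros x Hx.
    apply Rabs_def2 in Hx. destruct Hx as [Hx1 Hx2].
    pose proof (Rmin_l (c - IZR z) (IZR z + 1 - c)).
    pose proof (Rmin_r (c - IZR z) (IZR z + 1 - c)).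
    f_equal. symmetry. apply Int_part_spec. lra.
Qed.

Lemma gg_n n x : 0 <= x < 1 -> gg (INR n + x) = n.
Proof.
  intro H. unfold gg. rewrite <- (Int_part_spec (INR n + x) (Z.of_nat n)).
  apply Nat2Z.id. rewrite <- INR_IZR_INZ. lra.
Qed.

Lemma gg_n_left n x : -1 <= x < 0 -> gg (INR n + x) = (n - 1)%nat.
Proof.
  intro H. unfold gg. rewrite <- (Int_part_spec (INR n + x) (Z.of_nat n - 1)).
  lia. rewrite minus_IZR, <- INR_IZR_INZ. lra.
Qed.

Definition peqb (a b : proot) : bool :=
  match a, b with A1, A1 | A2, A2 | A3, A3 => true | _, _ => false end.
Lemma peqb_spec a b : reflect (a = b) (peqb a b).
Proof. destruct a, b; simpl; constructor; congruence. Qed.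

Definition tv (a0 : proot) (v : nat) (l0 : wt) (i : proot) : nat :=
  if peqb i a0 then v else aa i l0.

Lemma ev_i l0 n0 a0 i :
  (1 <= n0)%nat -> on_line n0 a0 l0 ->
  (forall (n : nat) (a : proot), (1 <= n)%nat -> on_line n a l0 -> n = n0 /\ a = a0) ->
  exists d : posreal, forall eps, Rabs eps < d ->
    (0 < eps -> aa i (wadd l0 (wscal eps (rvec a0))) = tv a0 n0 l0 i) /\
    (eps < 0 -> aa i (wadd l0 (wscal eps (rvec a0))) = tv a0 (n0 - 1) l0 i).
Proof.
  intros Hn Hon Hu. unfold tv.
  destruct (peqb_spec i a0) as [->|Hne].
  - assert (Hd : 0 < 1/2) by lra. exists (mkposreal _ Hd). simpl. intros eps He.
    apply Rabs_def2 in He. rewrite !aa_gg, ip_shift.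
    assert (Hs : ip (rvec a0) (rvec a0) = 2) by (destruct a0; unfold ip; simpl; ring).
    rewrite Hs. unfold on_line in Hon. rewrite Hon. split; intro.
    + apply gg_n; lra.
    + apply gg_n_left; lra.
  - destruct (stable (ip (rvec i) (wadd l0 rho))) as [d Hd].
    { intros n H1 H2. destruct (Hu n i H1 H2). congruence. }
    assert (Hd2 : 0 < d / 2) by (destruct d; simpl; lra).
    exists (mkposreal _ Hd2). simpl. intros eps He. rewrite !aa_gg, ip_shift.
    assert (Rabs (eps * ip (rvec i) (rvec a0)) < d).
    { rewrite Rabs_mult.
      assert (Rabs (ip (rvec i) (rvec a0)) <= 2).
      { destruct (ip_vals i a0) as [E|[E|E]]; rewrite E; unfold Rabs; destruct Rcase_abs; lra. }
      pose proof (Rabs_pos eps). pose proof (Rabs_pos (ip (rvec i) (rvec a0))). nra. }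
    split; intro; rewrite Hd by assumption; reflexivity.
Qed.

Lemma ev_all l0 n0 a0 :
  (1 <= n0)%nat -> on_line n0 a0 l0 ->
  (forall (n : nat) (a : proot), (1 <= n)%nat -> on_line n a l0 -> n = n0 /\ a = a0) ->
  exists d : posreal, forall eps, Rabs eps < d ->
    (0 < eps -> forall i, aa i (wadd l0 (wscal eps (rvec a0))) = tv a0 n0 l0 i) /\
    (eps < 0 -> forall i, aa i (wadd l0 (wscal eps (rvec a0))) = tv a0 (n0 - 1) l0 i).
Proof.
  intros Hn Hon Hu.
  destruct (ev_i l0 n0 a0 A1 Hn Hon Hu) as [d1 H1].
  destruct (ev_i l0 n0 a0 A2 Hn Hon Hu) as [d2 H2].
  destruct (ev_i l0 n0 a0 A3 Hn Hon Hu) as [d3 H3].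
  assert (Hd : 0 < Rmin d1 (Rmin d2 d3)).
  { destruct d1, d2, d3; simpl. repeat apply Rmin_glb_lt; lra. }
  exists (mkposreal _ Hd). cbn [pos]. intros eps He.
  pose proof (Rmin_l d1 (Rmin d2 d3)). pose proof (Rmin_r d1 (Rmin d2 d3)).
  pose proof (Rmin_l d2 d3). pose proof (Rmin_r d2 d3).
  destruct (H1 eps ltac:(lra)), (H2 eps ltac:(lra)), (H3 eps ltac:(lra)).
  split; intros Hs i; destruct i; auto.
Qed.

Lemma case1 (n0 a2 a3 : nat) (F : Z) : (1 <= n0)%nat -> a2 = Z.to_nat F ->
  a3 = Z.to_nat (F + Z.of_nat n0) ->
  sadd (ftilde n0 a2 a3) (sscal (-1) (ftilde (n0 - 1) a2 a3)) =
  sscal 2 (smul (mono n0 0) (ftilde 0 a3 a2)).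
Proof.
  intros Hn H2 H3. destruct n0 as [|k]; [lia|]. replace (S k - 1)%nat with k by lia.
  destruct (Z_le_gt_dec 0 F).
  - replace a3 with (a2 + S k)%nat by lia. apply alg1a.
  - replace a2 with 0%nat by lia. apply alg1b. lia.
Qed.

Lemma case2 (n0 a1 a3 : nat) (F : Z) : (1 <= n0)%nat -> a1 = Z.to_nat F ->
  a3 = Z.to_nat (F + Z.of_nat n0) ->
  sadd (ftilde a1 n0 a3) (sscal (-1) (ftilde a1 (n0 - 1) a3)) =
  sscal 2 (smul (mono 0 n0) (ftilde a3 0 a1)).
Proof.
  intros Hn H2 H3. destruct n0 as [|k]; [lia|]. replace (S k - 1)%nat with k by lia.
  destruct (Z_le_gt_dec 0 F).
  - replace a3 with (a1 + S k)%nat by lia. apply alg2a.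
  - replace a1 with 0%nat by lia. apply alg2b. lia.
Qed.

Lemma case3 (n0 a1 a2 b1 b2 : nat) (F : Z) (e : R) : (1 <= n0)%nat -> a1 = Z.to_nat F ->
  a2 = Z.to_nat (Z.of_nat n0 - F - 1) -> b1 = Z.to_nat (F - Z.of_nat n0) ->
  b2 = Z.to_nat (- F - 1) ->
  e = (if ((0 <=? F) && (F <? Z.of_nat n0))%Z%bool then -1 else 1) ->
  sadd (ftilde a1 a2 n0) (sscal (-1) (ftilde a1 a2 (n0 - 1))) =
  sscal (2 * e) (smul (mono n0 n0) (ftilde b1 b2 0)).
Proof.
  intros Hn H1 H2 H3 H4 He. destruct n0 as [|k]; [lia|]. replace (S k - 1)%nat with k by lia.
  destruct (Z.leb_spec 0 F); destruct (Z.ltb_spec F (Z.of_nat (S k))); simpl in He; subst e.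
  - replace b1 with 0%nat by lia. replace b2 with 0%nat by lia.
    replace k with (a1 + a2)%nat by lia. replace (2 * -1) with (-2) by ring. apply alg3b.
  - replace b2 with 0%nat by lia. replace a2 with 0%nat by lia.
    replace a1 with (S k + b1)%nat by lia. rewrite Rmult_1_r. apply alg3c.
  - replace b1 with 0%nat by lia. replace a1 with 0%nat by lia.
    replace a2 with (S k + b2)%nat by lia. rewrite Rmult_1_r. apply alg3a.
  - lia.
Qed.

Lemma reduce (t1 t2 t3 s1 s2 s3 b1 b2 b3 m k : nat) c p q :
  sadd (ftilde t1 t2 t3) (sscal (-1) (ftilde s1 s2 s3)) = sscal c (smul (mono m k) (ftilde b1 b2 b3)) ->
  smul (ftilde t1 t2 t3) invD p q - smul (ftilde s1 s2 s3) invD p q =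
  sscal c (smul (mono m k) (smul (ftilde b1 b2 b3) invD)) p q.
Proof.
  intro H. rewrite smul_assoc_mono, <- smul_sscal_l, <- H, smul_sadd_l, smul_sscal_l.
  unfold sadd, sscal. ring.
Qed.

Lemma gg_eq x z : IZR z <= x < IZR z + 1 -> gg x = Z.to_nat z.
Proof. intro H. unfold gg. f_equal. symmetry. apply Int_part_spec. lra. Qed.

Lemma INR_Z n : IZR (Z.of_nat n) = INR n.
Proof. symmetry; apply INR_IZR_INZ. Qed.

Lemma ipv i j : ip (rvec i) (rvec j) =
  match i, j with A1, A1 | A2, A2 | A3, A3 => 2 | A1, A2 | A2, A1 => -1 | _, _ => 1 end.
Proof. destruct i, j; unfold ip; simpl; ring. Qed.

Theorem lemma5 (l0 : wt) (n0 : nat) (a0 : proot) :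
  (1 <= n0)%nat ->
  on_line n0 a0 l0 ->
  (forall (n : nat) (a : proot), (1 <= n)%nat -> on_line n a l0 -> n = n0 /\ a = a0) ->
  exists Lp Lm : series,
    (forall p q : nat,
       filterlim (fun eps => fA2 (wadd l0 (wscal eps (rvec a0))) p q)
                 (at_right 0) (locally (Lp p q))) /\
    (forall p q : nat,
       filterlim (fun eps => fA2 (wadd l0 (wscal eps (rvec a0))) p q)
                 (at_left 0) (locally (Lm p q))) /\
    (forall p q : nat,
       Lp p q - Lm p q =
       sscal (2 * esign a0 l0)
             (smul (xpow n0 a0) (fA2 (wadd l0 (wscal (- INR n0) (rvec a0))))) p q).
Proof.
  intros Hn Hon Hu.
  destruct (ev_all l0 n0 a0 Hn Hon Hu) as [d Hd].
  exists (smul (ftilde (tv a0 n0 l0 A1) (tv a0 n0 l0 A2) (tv a0 n0 l0 A3)) invD),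
         (smul (ftilde (tv a0 (n0-1) l0 A1) (tv a0 (n0-1) l0 A2) (tv a0 (n0-1) l0 A3)) invD).
  split; [|split].
  - intros p q. eapply filterlim_ext_loc; [|apply filterlim_const].
    unfold at_right, within, locally. exists d. intros y Hy Hpos.
    change (Rabs (y - 0) < d) in Hy. rewrite Rminus_0_r in Hy.
    destruct (Hd y Hy) as [H _]. unfold fA2. rewrite !(H Hpos). reflexivity.
  - intros p q. eapply filterlim_ext_loc; [|apply filterlim_const].
    unfold at_left, within, locally. exists d. intros y Hy Hpos.
    change (Rabs (y - 0) < d) in Hy. rewrite Rminus_0_r in Hy.
    destruct (Hd y Hy) as [_ H]. unfold fA2. rewrite !(H Hpos). reflexivity.
  - intros p q. unfold fA2. unfold on_line in Hon.
    rewrite !aa_gg, !ip_shift, !ipv.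
    destruct a0; cbn [tv peqb]; rewrite !aa_gg; rewrite (ip3 (wadd l0 rho)) in *.
    + change (xpow n0 A1) with (mono n0 0). apply reduce. cbn [esign].
      rewrite Hon. replace (2 * 1) with 2 by ring.
      set (c := ip (rvec A2) (wadd l0 rho)) in *.
      pose proof (base_Int_part c) as [B1 B2]. set (F := Int_part c) in *.
      rewrite (gg_eq (INR n0 + - INR n0 * 2) (- Z.of_nat n0)) by (rewrite ?plus_IZR, ?minus_IZR, ?opp_IZR, ?INR_Z; lra).
      rewrite (gg_eq (c + - INR n0 * -1) (F + Z.of_nat n0)) by (rewrite ?plus_IZR, ?minus_IZR, ?opp_IZR, ?INR_Z; lra).
      rewrite (gg_eq (INR n0 + c + - INR n0 * 1) F) by (rewrite ?plus_IZR, ?minus_IZR, ?opp_IZR, ?INR_Z; lra).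
      rewrite (gg_eq (INR n0 + c) (F + Z.of_nat n0)) by (rewrite ?plus_IZR, ?minus_IZR, ?opp_IZR, ?INR_Z; lra).
      replace (Z.to_nat (- Z.of_nat n0)) with 0%nat by lia.
      apply (case1 n0 _ _ F); auto.
    + change (xpow n0 A2) with (mono 0 n0). apply reduce. cbn [esign].
      rewrite Hon. replace (2 * 1) with 2 by ring.
      set (c := ip (rvec A1) (wadd l0 rho)) in *.
      pose proof (base_Int_part c) as [B1 B2]. set (F := Int_part c) in *.
      rewrite (gg_eq (INR n0 + - INR n0 * 2) (- Z.of_nat n0)) by (rewrite ?plus_IZR, ?minus_IZR, ?opp_IZR, ?INR_Z; lra).
      rewrite (gg_eq (c + - INR n0 * -1) (F + Z.of_nat n0)) by (rewrite ?plus_IZR, ?minus_IZR, ?opp_IZR, ?INR_Z; lra).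
      rewrite (gg_eq (c + INR n0 + - INR n0 * 1) F) by (rewrite ?plus_IZR, ?minus_IZR, ?opp_IZR, ?INR_Z; lra).
      rewrite (gg_eq (c + INR n0) (F + Z.of_nat n0)) by (rewrite ?plus_IZR, ?minus_IZR, ?opp_IZR, ?INR_Z; lra).
      replace (Z.to_nat (- Z.of_nat n0)) with 0%nat by lia.
      apply (case2 n0 _ _ F); auto.
    + change (xpow n0 A3) with (mono n0 n0). apply reduce.
      rewrite Hon.
      set (c := ip (rvec A1) (wadd l0 rho)) in *.
      set (c2 := ip (rvec A2) (wadd l0 rho)) in *.
      pose proof (base_Int_part c) as [B1 B2]. set (F := Int_part c) in *.
      assert (NI : IZR F <> c).
      { intro E. destruct (Z_le_gt_dec F 0) as [HF|HF].
        - destruct (Hu (Z.to_nat (Z.of_nat n0 - F)) A2) as [_ HH]; [lia| |discriminate].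
          unfold on_line. fold c2. rewrite INR_IZR_INZ, Z2Nat.id by lia.
          rewrite minus_IZR, INR_Z. lra.
        - destruct (Hu (Z.to_nat F) A1) as [_ HH]; [lia| |discriminate].
          unfold on_line. fold c. rewrite INR_IZR_INZ, Z2Nat.id by lia. lra. }
      assert (B3 : c < IZR F + 1) by lra.
      assert (B4 : IZR F < c) by lra.
      rewrite (gg_eq (INR n0 + - INR n0 * 2) (- Z.of_nat n0)) by (rewrite ?plus_IZR, ?minus_IZR, ?opp_IZR, ?INR_Z; lra).
      rewrite (gg_eq (c + - INR n0 * 1) (F - Z.of_nat n0)) by (rewrite ?plus_IZR, ?minus_IZR, ?opp_IZR, ?INR_Z; lra).
      rewrite (gg_eq (c2 + - INR n0 * 1) (- F - 1)) by (rewrite ?plus_IZR, ?minus_IZR, ?opp_IZR, ?INR_Z; lra).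
      rewrite (gg_eq c2 (Z.of_nat n0 - F - 1)) by (rewrite ?plus_IZR, ?minus_IZR, ?opp_IZR, ?INR_Z; lra).
      replace (Z.to_nat (- Z.of_nat n0)) with 0%nat by lia.
      apply (case3 n0 _ _ _ _ F); auto.
      unfold esign. change alpha1 with (rvec A1). change alpha2 with (rvec A2). fold c c2.
      pose proof (Hon) as Hon'.
      destruct (Z.leb_spec 0 F) as [Z1|Z1]; destruct (Z.ltb_spec F (Z.of_nat n0)) as [Z2|Z2]; simpl;
      [ assert (Z3 : (F + 1 <= Z.of_nat n0)%Z) by lia; apply IZR_le in Z1; apply IZR_le in Z3
      | apply IZR_le in Z1; apply IZR_le in Z2
      | assert (Z3 : (F <= -1)%Z) by lia; apply IZR_le in Z3
      | assert (Z3 : (F <= -1)%Z) by lia; apply IZR_le in Z3 ];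
      rewrite ?plus_IZR, ?INR_Z in *;
      destruct (Rle_dec 0 c); destruct (Rle_dec 0 c2); try reflexivity; exfalso.
      all: lra.
Qed.
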